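(* Let $k$ be a field of characteristic $\neq 2$ and let $\mathcal O=v_0k[t]\oplus v_1k[t]\oplus v_2k[t]$ be the Lie algebra described in the context. Then: (i) $\mathcal O$ is generated, as a Lie algebra over $k$, by $v_0,v_1,v_2$; (ii) the centroid of $\mathcal O$ is isomorphic to $k[t]$ (every element of the centroid is the multiplication by some polynomial $p(t)\in k[t]$); (iii) $\mathcal O$ is prime.
   Context: $\mathcal O$ is the Lie algebra over $k$ which is a free $k[t]$-module with basis $v_0,v_1,v_2$, whose bracket is $k[t]$-bilinear and determined by $[v_0,v_1]=-v_2(t-1)$, $[v_1,v_2]=-v_0$, $[v_2,v_0]=v_1t$. (Concretely, in $\mathfrak{sl}_2(k)\otimes k[t,t^{-1},(1-t)^{-1}]$ it is the subalgebra $u_0(t-1)k[t]\oplus u_1k[t]\oplus u_2tk[t]$ with $v_0=u_0(t-1)$, $v_1=u_1$, $v_2=u_2t$, and it is isomorphic to the Onsager algebra, the Lie algebra with generators $A,B$ and relations $[A,[A,[A,B]]]=4[A,B]$, $[B,[B,[B,A]]]=4[B,A]$.) The centroid of a Lie algebra $L$ over $k$ is $\{f\in\mathrm{End}_k(L): f([x,y])=[x,f(y)]\ \forall x,y\in L\}$. A Lie algebra is prime if the bracket of two nonzero ideals is never zero. *)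

(* Defs.v *)
From mathcomp Require Import all_boot all_algebra.
Set Implicit Arguments.
Unset Strict Implicit.
Unset Printing Implicit Defensive.
Import GRing.Theory.
Local Open Scope ring_scope.

(* The Onsager algebra O = v0 k[t] (+) v1 k[t] (+) v2 k[t], a free k[t]-module
   of rank 3; an element a0 v0 + a1 v1 + a2 v2 is represented by the triple
   ((a0, a1), a2) of polynomials. *)
Notation Onsager k := ({poly k} * {poly k} * {poly k})%type.

Section Onsager.
Variable k : fieldType.

Definition v0 : Onsager k := (1, 0, 0).
Definition v1 : Onsager k := (0, 1, 0).
Definition v2 : Onsager k := (0, 0, 1).

(* k[t]-bilinear bracket determined by
   [v0,v1] = -v2 (t-1), [v1,v2] = -v0, [v2,v0] = v1 t. *)
Definition Obr (x y : Onsager k) : Onsager k :=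
  let a0 := x.1.1 in let a1 := x.1.2 in let a2 := x.2 in
  let b0 := y.1.1 in let b1 := y.1.2 in let b2 := y.2 in
  (- (a1 * b2 - a2 * b1),
   'X * (a2 * b0 - a0 * b2),
   - ('X - 1) * (a0 * b1 - a1 * b0)).

Definition Opmul (p : {poly k}) (x : Onsager k) : Onsager k :=
  (p * x.1.1, p * x.1.2, p * x.2).

Definition is_subalgebra (S : Onsager k -> Prop) : Prop :=
  [/\ S 0, (forall x y, S x -> S y -> S (x + y)),
      (forall (c : k) x, S x -> S (c *: x)) &
      (forall x y, S x -> S y -> S (Obr x y))].

Definition generates (X : Onsager k -> Prop) : Prop :=
  forall S, is_subalgebra S -> (forall x, X x -> S x) -> forall x, S x.

Definition is_ideal (I : Onsager k -> Prop) : Prop :=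
  [/\ I 0, (forall x y, I x -> I y -> I (x + y)),
      (forall (c : k) x, I x -> I (c *: x)) &
      (forall x y, I y -> I (Obr x y))].

Definition in_centroid (f : Onsager k -> Onsager k) : Prop :=
  [/\ (forall x y, f (x + y) = f x + f y),
      (forall (c : k) x, f (c *: x) = c *: f x) &
      (forall x y, f (Obr x y) = Obr x (f y))].

(* prime: the bracket [I,J] (k-span of all [a,b], a in I, b in J) of two
   nonzero ideals is never zero *)
Definition is_prime : Prop :=
  forall I J, is_ideal I -> is_ideal J ->
    (exists a, I a /\ a <> 0) -> (exists b, J b /\ b <> 0) ->
    exists a b, [/\ I a, J b & Obr a b <> 0].

End Onsager.

(* Main.v *)
Require Import Defs.
From mathcomp Require Import all_boot all_algebra.
From mathcomp Require Import ring.
Import GRing.Theory.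
Local Open Scope ring_scope.

Section S.
Variable k : fieldType.

Lemma scaleO (c : k) (a b d : {poly k}) :
  c *: ((a, b, d) : Onsager k) = (c%:P * a, c%:P * b, c%:P * d).
Proof. by rewrite /GRing.scale /= !mul_polyC. Qed.
Lemma addO (a b d a' b' d' : {poly k}) :
  ((a, b, d) : Onsager k) + (a',b',d') = (a+a', b+b', d+d').
Proof. by []. Qed.
Lemma oppO (a b d : {poly k}) :
  - ((a, b, d) : Onsager k) = (-a, -b, -d).
Proof. by []. Qed.

Ltac oeq := rewrite ?scaleO ?addO ?oppO /Obr /Opmul /v0 /v1 /v2 /=;
  rewrite ?polyCN ?polyC1; congr (_,_,_); ring.

Lemma gen_poly S : is_subalgebra S -> S (v0 k) -> S (v1 k) -> S (v2 k) ->
  forall p : {poly k}, [/\ S (p,0,0), S (0,p,0) & S (0,0,p)].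
Proof.
case=> S0 SD SZ SB h0 h1 h2.
have hc : forall c : k, [/\ S (c%:P,0,0), S (0,c%:P,0) & S(0,0,c%:P)].
  move=> c; split.
  - have -> : (c%:P,0,0) = c *: v0 k by oeq. exact: SZ.
  - have -> : (0,c%:P,0) = c *: v1 k by oeq. exact: SZ.
  - have -> : (0,0,c%:P) = c *: v2 k by oeq. exact: SZ.
elim/poly_ind => [|p c [hp0 hp1 hp2]]; first by split; exact: S0.
have q1 : S (0, p*'X, 0).
  have -> : (0,p*'X,0) = (-1) *: Obr (p,0,0) (v2 k) by oeq.
  by apply: SZ; apply: SB.
have q0 : S (p*'X, 0, 0).
  have -> : (p*'X,0,0) = (-1) *: Obr (0,p*'X,0) (v2 k) by oeq.
  by apply: SZ; apply: SB.
have q2 : S (0,0,p*'X).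
  have -> : (0,0,p*'X) = Obr (0,p,0) (v0 k) + (0,0,p) by oeq.
  by apply: SD => //; apply: SB.
case: (hc c) => c0 c1 c2; split.
- have -> : ((p*'X + c%:P, 0, 0) : Onsager k) = (p*'X,0,0) + (c%:P,0,0) by oeq.
  exact: SD.
- have -> : ((0, p*'X + c%:P, 0) : Onsager k) = (0,p*'X,0) + (0,c%:P,0) by oeq.
  exact: SD.
- have -> : ((0, 0, p*'X + c%:P) : Onsager k) = (0,0,p*'X) + (0,0,c%:P) by oeq.
  exact: SD.
Qed.

Lemma generation :
  generates (fun x : Onsager k => x = v0 k \/ x = v1 k \/ x = v2 k).
Proof.
move=> S hS hX [[a b] d].
have h0 : S (v0 k) by apply: hX; left.
have h1 : S (v1 k) by apply: hX; right; left.
have h2 : S (v2 k) by apply: hX; right; right.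
case: (@gen_poly S hS h0 h1 h2 a) => ha _ _.
case: (@gen_poly S hS h0 h1 h2 b) => _ hb _.
case: (@gen_poly S hS h0 h1 h2 d) => _ _ hd.
case: hS => S0 SD SZ SB.
have -> : ((a,b,d) : Onsager k) = (a,0,0) + (0,b,0) + (0,0,d) by oeq.
exact: (SD _ _ (SD _ _ ha hb) hd).
Qed.

Lemma opmul_centroid (p : {poly k}) : in_centroid (Opmul p).
Proof.
split.
- move=> [[a b] d] [[a' b'] d']; oeq.
- move=> c [[a b] d]; oeq.
- move=> [[a b] d] [[a' b'] d']; oeq.
Qed.

Lemma Xn0 : ('X : {poly k}) != 0. Proof. by rewrite polyX_eq0. Qed.
Lemma Xm1n0 : ('X - 1 : {poly k}) != 0.
Proof. by rewrite -polyC1 polyXsubC_eq0. Qed.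

Lemma centroid f : in_centroid f ->
  exists! p : {poly k}, forall x, f x = Opmul p x.
Proof.
case=> fD fZ fB.
have fN : forall x, f (-x) = - f x.
  by move=> x; rewrite -scaleN1r fZ scaleN1r.
have fB' : forall x y, f (Obr x y) = - Obr y (f x).
  by move=> x y; rewrite (_ : Obr x y = - Obr y x) ?fN ?fB //; oeq.
have ev0 : v0 k = - Obr (v1 k) (v2 k) by oeq.
have E1 : f (v0 k) = - Obr (v1 k) (f (v2 k)) by rewrite {1}ev0 fN fB.
have E2 : f (v0 k) = Obr (v2 k) (f (v1 k)) by rewrite {1}ev0 fN fB' opprK.
have E3 : Obr (v2 k) (f (v0 k)) = - Obr (v0 k) (f (v2 k)) by rewrite -fB fB'.
have E4 : Obr (v0 k) (f (v1 k)) = - Obr (v1 k) (f (v0 k)) by rewrite -fB fB'.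
move Ef0: (f (v0 k)) E1 E2 E3 E4 => [[a0 a1] a2] E1 E2 E3 E4.
move Ef1: (f (v1 k)) E2 E4 => [[b0 b1] b2] E2 E4.
move Ef2: (f (v2 k)) E1 E3 => [[c0 c1] c2] E1 E3.
move: E1 E2 E3 E4; rewrite /Obr /v0 /v1 /v2 /=.
case=> e11 e12 e13; case=> e21 e22 e23; case=> e31 e32 e33; case=> e41 e42 e43.
have ha1 : a1 = 0.
  transitivity (-(0*a2 - 1*a1)); first ring. by rewrite e31; ring.
have ha2 : a2 = 0.
  transitivity (- - (1 * a2 - 0 * a1)); first ring. by rewrite -e41; ring.
have hb2 : b2 = 0.
  have : 'X * b2 = 0.
    transitivity (-('X*(0*b0 - 1*b2))); first ring. by rewrite e42; ring.
  by move/eqP; rewrite mulf_eq0 (negbTE Xn0) /= => /eqP.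
have hb0 : b0 = 0.
  have : 'X * b0 = 0.
    transitivity ('X*(1*b0 - 0*b2)); first ring. by rewrite -e22.
  by move/eqP; rewrite mulf_eq0 (negbTE Xn0) /= => /eqP.
have hc1 : c1 = 0.
  have : ('X - 1) * c1 = 0.
    transitivity (-(-('X-1)*(1*c1 - 0*c0))); first ring. by rewrite -e33; ring.
  by move/eqP; rewrite mulf_eq0 (negbTE Xm1n0) /= => /eqP.
have hc0 : c0 = 0.
  have : ('X - 1) * c0 = 0.
    transitivity (- (- (- ('X - 1) * (0 * c1 - 1 * c0)))); first ring.
    by rewrite -e13 ha2; ring.
  by move/eqP; rewrite mulf_eq0 (negbTE Xm1n0) /= => /eqP.
have hc2 : c2 = a0 by rewrite e11; ring.
have hb1 : b1 = a0 by rewrite e21; ring.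
rewrite ha1 ha2 in Ef0; rewrite hb0 hb1 hb2 in Ef1; rewrite hc0 hc1 hc2 in Ef2.
clear -fD fZ fB Ef0 Ef1 Ef2.
have f0 : f 0 = 0.
  have h := fD 0 0; rewrite addr0 in h.
  by apply: (@addrI _ (f 0)); rewrite addr0 -h.
have hS : is_subalgebra (fun x => f x = Opmul a0 x).
  split.
  - by rewrite f0; oeq.
  - by move=> x y hx hy; rewrite fD hx hy; case: x {hx} => [[? ?] ?]; case: y {hy} => [[? ?] ?]; oeq.
  - by move=> c x hx; rewrite fZ hx; case: x {hx} => [[? ?] ?]; oeq.
  - by move=> x y hx hy; rewrite fB hy; case: x {hx} => [[? ?] ?]; case: y {hy} => [[? ?] ?]; oeq.
have hall : forall x, f x = Opmul a0 x.
  apply: (@generation _ hS) => x [->|[->|->]].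
  - by rewrite Ef0; oeq.
  - by rewrite Ef1; oeq.
  - by rewrite Ef2; oeq.
exists a0; split => // q hq; have := hq (v0 k).
by rewrite hall /Opmul /v0 /= !mulr1 => -[].
Qed.

Lemma ideal_v2 (I : Onsager k -> Prop) a : is_ideal I -> I a -> a <> 0 ->
  exists r, r != 0 /\ I (0,0,r).
Proof.
case=> _ _ _ IB; case: a => [[a0 a1] a2] Ia na.
have nX1 := Xm1n0; have nX := Xn0.
case: (eqVneq a2 0) => [e2|h2].
  case: (eqVneq a1 0) => [e1|h1].
    have h0 : a0 != 0 by apply/eqP => e0; apply: na; rewrite e0 e1 e2.
    exists (('X - 1) * a0); split; first by rewrite mulf_neq0.
    have -> : ((0,0,('X-1)*a0) : Onsager k) = Obr (v1 k) (a0,a1,a2)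
      by rewrite e1 e2; oeq.
    exact: IB.
  exists (-(('X - 1) * a1)); split; first by rewrite oppr_eq0 mulf_neq0.
  have -> : ((0,0,-(('X-1)*a1)) : Onsager k) = Obr (v0 k) (a0,a1,a2)
    by rewrite e2; oeq.
  exact: IB.
exists (-(('X - 1) * 'X * a2)); split; first by rewrite oppr_eq0 !mulf_neq0.
have -> : ((0,0,-(('X - 1) * 'X * a2)) : Onsager k) =
   Obr (v1 k) (Obr (v2 k) (Obr (v0 k) (a0,a1,a2))) by oeq.
by do 3! apply IB.
Qed.

Lemma prime_O : is_prime k.
Proof.
move=> I J hI hJ [a [Ia na]] [b [Jb nb]].
have [r [nr Ir]] := @ideal_v2 _ _ hI Ia na.
have [s [ns Js]] := @ideal_v2 _ _ hJ Jb nb.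
exists (Obr (v0 k) (0,0,r)), (0,0,s); split => //.
  by case: hI => _ _ _ IB; apply: IB.
have -> : Obr (Obr (v0 k) (0,0,r)) (0,0,s) = ('X * r * s, 0, 0) by oeq.
move/(congr1 (fun x => x.1.1)) => /= /eqP; apply/negP; exact: (mulf_neq0 (mulf_neq0 Xn0 nr) ns).
Qed.

End S.

Theorem lemma4p5 (k : fieldType) (hk : 2 \notin [pchar k]) :
  [/\ generates (fun x : Onsager k => x = v0 k \/ x = v1 k \/ x = v2 k),
      (* centroid = { multiplication by p(t) : p in k[t] }, with p unique *)
      ((forall p : {poly k}, in_centroid (Opmul p)) /\
       (forall f, in_centroid f ->
          exists! p : {poly k}, forall x, f x = Opmul p x))
    & is_prime k].
Proof.
split; [exact: generation | split; [exact: opmul_centroid | exact: centroid] | exact: prime_O].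
Qed.
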